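(* Let $p\ge1$, $l\in\mathbb{Z}_{\ge0}$, and $s_1,\dots,s_p\in\mathbb{C}$ with $|s_i|<1$ or $s_i=1$ for every $1\le i\le p$. Then for every $\varepsilon>0$, $(\Delta^l\mathtt{s}^{\mathrm{sh}}_{(1,\dots,1;s_1,\dots,s_p)})(m)=O\bigl(m^{-(l+1-\varepsilon)}\bigr)$ as $m\to\infty$.
   Context: Convention $0^0=1$. $\mathtt{s}^{\mathrm{sh}}_{(1,\dots,1;s_1,\dots,s_p)}(m)=\sum_{m=m_1\ge\cdots\ge m_p\ge0}\frac{s_1^{m_1-m_2}\cdots s_{p-1}^{m_{p-1}-m_p}s_p^{m_p+1}}{(m_1+1)\cdots(m_p+1)}$; $(\Delta a)(m)=a(m)-a(m+1)$. *)

(* Defs.v *)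
From HB Require Import structures.
From mathcomp Require Import all_boot all_order all_algebra.
From mathcomp Require Import all_classical all_reals all_analysis.
From mathcomp Require Import complex.
Set Implicit Arguments. Unset Strict Implicit. Unset Printing Implicit Defensive.
Import Order.TTheory GRing.Theory Num.Theory.
Local Open Scope ring_scope.

Definition cmod (R : realType) (z : R[i]) : R := ComplexField.Normc.normc z.

(* value m_{k+1} (0-based index k) of an index vector f = (m_1,...,m_p);
   out-of-range indices give 0 (only used for the harmless check m_{p+1}=0 <= m_p). *)
Definition mval (p m : nat) (f : {ffun 'I_p -> 'I_m.+1}) (k : nat) : nat :=
  match (insub k : option 'I_p) with Some i => nat_of_ord (f i) | None => 0%N end.

Definition shexp (p m : nat) (f : {ffun 'I_p -> 'I_m.+1}) (k : nat) : nat :=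
  if (k.+1 < p)%N then (mval f k - mval f k.+1)%N else (mval f k).+1.

Definition shadm (p m : nat) (f : {ffun 'I_p -> 'I_m.+1}) : bool :=
  (mval f 0 == m) && [forall i : 'I_p, (mval f i.+1 <= mval f i)%N].

(* s^sh_{(1,...,1; s_1,...,s_p)}(m), with s_{k+1} = s k for k : 'I_p (0^0 = 1 via ^+) *)
Definition ssh (R : realType) (p : nat) (s : 'I_p -> R[i]) (m : nat) : R[i] :=
  \sum_(f : {ffun 'I_p -> 'I_m.+1} | shadm f)
    (\prod_(i < p) s i ^+ shexp f i) / (\prod_(i < p) ((mval f i).+1)%:R).

Definition delta (R : ringType) (a : nat -> R) : nat -> R := fun m => a m - a m.+1.

(* Main.v *)
Require Import Defs.
From HB Require Import structures.
From mathcomp Require Import all_boot all_order all_algebra.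
From mathcomp Require Import all_classical all_reals all_analysis.
From mathcomp Require Import complex.
Import Order.TTheory GRing.Theory Num.Theory.
Local Open Scope ring_scope.
From mathcomp Require Import ring lra zify.

Set Implicit Arguments. Unset Strict Implicit.

Section Comb.
Variable R : realType.
Local Notation C := (R[i]).

Definition adm (p M n : nat) (f : {ffun 'I_p -> 'I_M.+1}) : bool :=
  (mval f 0 == n) && [forall i : 'I_p, (mval f i.+1 <= mval f i)%N].

Definition term (p M : nat) (t : nat -> C) (f : {ffun 'I_p -> 'I_M.+1}) : C :=
  (\prod_(i < p) t i ^+ shexp f i) / (\prod_(i < p) ((mval f i).+1)%:R).

Definition TT (p M : nat) (t : nat -> C) (n : nat) : C :=
  \sum_(f : {ffun 'I_p -> 'I_M.+1} | adm n f) term t f.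

Definition fcons (p M : nat) (x : 'I_M.+1) (g : {ffun 'I_p -> 'I_M.+1})
  : {ffun 'I_p.+1 -> 'I_M.+1} :=
  [ffun i => if unlift ord0 i is Some j then g j else x].

Lemma mval_ord p M (f : {ffun 'I_p -> 'I_M.+1}) (i : 'I_p) : mval f i = f i.
Proof. by rewrite /mval valK. Qed.

Lemma mval_ge p M (f : {ffun 'I_p -> 'I_M.+1}) k : (p <= k)%N -> mval f k = 0%N.
Proof. by move=> h; rewrite /mval insubF // ltnNge h. Qed.

Lemma mval_fcons0 p M x (g : {ffun 'I_p -> 'I_M.+1}) : mval (fcons x g) 0 = x.
Proof. by rewrite (mval_ord _ ord0) ffunE unlift_none. Qed.

Lemma mval_fconsS p M x (g : {ffun 'I_p -> 'I_M.+1}) k :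
  mval (fcons x g) k.+1 = mval g k.
Proof.
case: (ltnP k p) => hk; last by rewrite !mval_ge.
rewrite (mval_ord _ (lift ord0 (Ordinal hk))) (mval_ord _ (Ordinal hk)).
by rewrite ffunE liftK.
Qed.

Lemma shexp_fconsS p M x (g : {ffun 'I_p -> 'I_M.+1}) k :
  shexp (fcons x g) k.+1 = shexp g k.
Proof. by rewrite /shexp !mval_fconsS ltnS. Qed.

Lemma sum_fcons p M (F : {ffun 'I_p.+1 -> 'I_M.+1} -> C) :
  \sum_f F f = \sum_(x : 'I_M.+1) \sum_(g : {ffun 'I_p -> 'I_M.+1}) F (fcons x g).
Proof.
rewrite pair_big /= (reindex (fun u : 'I_M.+1 * {ffun 'I_p -> 'I_M.+1} => fcons u.1 u.2)) //.
exists (fun f : {ffun 'I_p.+1 -> 'I_M.+1} => (f ord0, [ffun j : 'I_p => f (lift ord0 j)])) => [[x g] _|f _] /=.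
  congr pair; first by rewrite ffunE unlift_none.
  by apply/ffunP => j; rewrite !ffunE liftK.
apply/ffunP => i; rewrite ffunE; case: unliftP => [j ->|->]; by rewrite ?ffunE.
Qed.

Lemma decr_iota p M (f : {ffun 'I_p -> 'I_M.+1}) :
  [forall i : 'I_p, (mval f i.+1 <= mval f i)%N] =
  all (fun k => mval f k.+1 <= mval f k)%N (iota 0 p).
Proof.
apply/forallP/allP => [h k|h i].
  by rewrite mem_iota add0n => hk; exact: (h (Ordinal hk)).
by apply: h; rewrite mem_iota add0n ltn_ord.
Qed.

Lemma adm_fcons p M n x (g : {ffun 'I_p -> 'I_M.+1}) :
  adm n (fcons x g) = (x == n :> nat) && (mval g 0 <= x)%N &&
     [forall i : 'I_p, (mval g i.+1 <= mval g i)%N].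
Proof.
rewrite /adm !decr_iota /= mval_fcons0 mval_fconsS.
rewrite -andbA; congr andb; congr andb.
rewrite (iotaDl 1 0 p) all_map; apply: eq_all => k /=.
by rewrite !mval_fconsS.
Qed.


Fixpoint rec (p : nat) (t : nat -> C) (n : nat) : C :=
  match p with
  | 0 => 0
  | p'.+1 => match p' with
             | 0 => t 0%N ^+ n.+1 / n.+1%:R
             | _ => n.+1%:R^-1 * \sum_(j < n.+1) t 0%N ^+ j * rec p' (fun k => t k.+1) (n - j)
             end
  end.

Lemma TT_base M t n : (n <= M)%N -> TT 1 M t n = t 0%N ^+ n.+1 / n.+1%:R.
Proof.
move=> hn; rewrite /TT big_mkcond sum_fcons (bigD1 (Ordinal (hn : n < M.+1)%N)) //=.
rewrite [X in _ + X]big1 ?addr0; last first.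
  move=> x hx; apply: big1 => g _; rewrite adm_fcons.
  case: eqP => //= hxn; case/eqP: hx; exact: val_inj.
rewrite (eq_bigr (fun _ => t 0%N ^+ n.+1 / n.+1%:R)); last first.
  move=> g _; rewrite adm_fcons eqxx /= mval_ge // leq0n /=.
  rewrite [X in if X then _ else _](_ : _ = true); last by apply/forallP => -[].
  rewrite /term !big_ord1 /shexp /= mval_fcons0 //.
by rewrite sumr_const card_ffun !card_ord expn0 mulr1n.
Qed.

Lemma term_fcons p M t (x : 'I_M.+1) (g : {ffun 'I_p.+1 -> 'I_M.+1}) :
  term t (fcons x g) = x.+1%:R^-1 * (t 0%N ^+ (x - mval g 0) * term (fun k => t k.+1) g).
Proof.
rewrite /term [\prod_(i < p.+2) _]big_ord_recl [\prod_(i < p.+2) _]big_ord_recl /= mval_fcons0.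
rewrite {1}/shexp /= mval_fcons0 (mval_fconsS x g 0).
have b0 (i : nat) : bump 0 i = i.+1 by rewrite /bump leq0n add1n.
under eq_bigr => i _ do rewrite b0 shexp_fconsS.
under [in X in _ / X]eq_bigr => i _ do rewrite b0 mval_fconsS.
by rewrite invfM; ring.
Qed.

Lemma TT_step p M t n : (n <= M)%N ->
  TT p.+2 M t n = n.+1%:R^-1 * \sum_(j < n.+1) t 0%N ^+ j * TT p.+1 M (fun k => t k.+1) (n - j).
Proof.
move=> hn; rewrite /TT big_mkcond sum_fcons (bigD1 (Ordinal (hn : n < M.+1)%N)) //=.
rewrite [X in _ + X]big1 ?addr0; last first.
  move=> x hx; apply: big1 => g _; rewrite adm_fcons.
  case: eqP => //= hxn; case/eqP: hx; exact: val_inj.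
rewrite [RHS]mulr_sumr.
under [RHS]eq_bigr => j _ do rewrite big_mkcond mulr_sumr mulr_sumr.
rewrite [RHS]exchange_big; apply: eq_bigr => g _ /=.
rewrite adm_fcons eqxx /= term_fcons /=.
set D := [forall _, _].
have [Dg|nD] := boolP D; last first.
  rewrite andbF; apply/esym/big1 => j _; rewrite /adm -/D (negbTE nD) andbF.
  by rewrite !mulr0.
rewrite andbT.
case: (leqP (mval g 0) n) => hg; last first.
  apply/esym/big1 => j _; rewrite /adm -/D Dg andbT.
  case: eqP => [h|]; last by rewrite !mulr0.
  by move: hg; rewrite h ltnNge leq_subr.
have hj : (n - mval g 0 < n.+1)%N by rewrite ltnS leq_subr.
rewrite (bigD1 (Ordinal hj)) //= big1 ?addr0.
  by rewrite /adm -/D Dg andbT subKn // eqxx.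
move=> j hj'; rewrite /adm -/D Dg andbT; case: eqP => [h|]; last by rewrite !mulr0.
case/eqP: hj'; apply: val_inj => /=; rewrite h subKn //.
by rewrite -ltnS.
Qed.

Lemma TT_rec p t M n : (n <= M)%N -> TT p.+1 M t n = rec p.+1 t n.
Proof.
elim: p t n => [|p IH] t n hn; first exact: TT_base.
rewrite TT_step //=; congr (_ * _); apply: eq_bigr => j _.
by rewrite IH // (leq_trans (leq_subr _ _) hn).
Qed.


Definition ext p (s : 'I_p -> C) (k : nat) : C :=
  if insub k is Some i then s i else 0.

Lemma ssh_rec p (s : 'I_p.+1 -> C) m : ssh s m = rec p.+1 (ext s) m.
Proof.
rewrite -(TT_rec _ _ (leqnn m)) /TT /ssh; apply: eq_bigr => f _; rewrite /term.
by congr (_ / _); apply: eq_bigr => i _; rewrite /ext valK.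
Qed.

End Comb.

Set Implicit Arguments. Unset Strict Implicit.

Section Ana.
Variable R : realType.
Local Notation C := (R[i]).
Local Notation nm := (@cmod R).

Lemma nm_ge0 (z : C) : 0 <= nm z.
Proof. by case: z => a b; rewrite /cmod /= sqrtr_ge0. Qed.
Lemma nmD (x y : C) : nm (x + y) <= nm x + nm y.
Proof. exact: le_normcD. Qed.
Lemma nmN (x : C) : nm (- x) = nm x.
Proof. exact: normcN. Qed.
Lemma nmM (x y : C) : nm (x * y) = nm x * nm y.
Proof. exact: ComplexField.Normc.normcM. Qed.
Lemma nmV (x : C) : nm (x^-1) = (nm x)^-1.
Proof. exact: ComplexField.Normc.normcV. Qed.
Lemma nm0 : nm 0 = 0.
Proof. exact: ComplexField.Normc.normc0. Qed.
Lemma nm1 : nm 1 = 1.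
Proof. exact: ComplexField.Normc.normc1. Qed.
Lemma nmX (x : C) n : nm (x ^+ n) = nm x ^+ n.
Proof. by elim: n => [|n IH]; rewrite ?nm1 // !exprS nmM IH. Qed.
Lemma nm_nat n : nm (n%:R) = n%:R.
Proof. by rewrite /cmod -[n%:R]/(1 *+ n) (@normcMn R) ComplexField.Normc.normc1. Qed.
Lemma nmB (x y : C) : nm (x - y) <= nm x + nm y.
Proof. by rewrite -(nmN y) nmD. Qed.
Lemma nm_sum (I : Type) (r : seq I) (P : pred I) (F : I -> C) :
  nm (\sum_(i <- r | P i) F i) <= \sum_(i <- r | P i) nm (F i).
Proof.
elim/big_rec2: _ => [|i y1 y2 _ h]; first by rewrite nm0.
by apply: le_trans (nmD _ _) _; rewrite lerD2l.
Qed.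

Definition H (m : nat) : R := \sum_(i < m.+1) (i.+1%:R)^-1.

Lemma H_S m : H m.+1 = H m + (m.+2%:R)^-1.
Proof. by rewrite /H big_ord_recr. Qed.
Lemma H_ge1 m : 1 <= H m.
Proof.
elim: m => [|m IH]; first by rewrite /H big_ord1 invr1.
by rewrite H_S; apply: le_trans IH _; rewrite lerDl invr_ge0.
Qed.
Lemma H_ge0 m : 0 <= H m.
Proof. exact: le_trans ler01 (H_ge1 m). Qed.
Lemma H_mono m n : (m <= n)%N -> H m <= H n.
Proof.
move/subnK <-; elim: (n - m)%N => [|k IH] //.
by rewrite addSn H_S; apply: le_trans IH _; rewrite lerDl invr_ge0.
Qed.
Lemma H_S2 m : H m.+1 <= 2 * H m.
Proof.
rewrite H_S mulr2n mulrDl mul1r lerD2l; apply: le_trans (H_ge1 m).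
by rewrite invf_le1 // ler1n.
Qed.
Lemma Hpow_le m q q' : (q <= q')%N -> H m ^+ q <= H m ^+ q'.
Proof. by move=> h; apply: ler_weXn2l => //; exact: H_ge1. Qed.
Lemma Hpow_ge0 m q : 0 <= H m ^+ q.
Proof. exact: exprn_ge0 (H_ge0 m). Qed.

Local Notation D := (@delta C).

Lemma iter_add k (a b : nat -> C) :
  iter k D (fun m => a m + b m) = (fun m => iter k D a m + iter k D b m).
Proof.
elim: k => [|k IH] //=; rewrite IH; apply: boolp.funext => m.
by rewrite /delta; ring.
Qed.
Lemma iter_scale k (z : C) (a : nat -> C) :
  iter k D (fun m => z * a m) = (fun m => z * iter k D a m).
Proof.
elim: k => [|k IH] //=; rewrite IH; apply: boolp.funext => m.
by rewrite /delta; ring.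
Qed.
Lemma iter_shift k (a : nat -> C) :
  iter k D (fun m => a m.+1) = (fun m => iter k D a m.+1).
Proof. by elim: k => [|k IH] //=; rewrite IH. Qed.

Definition bnd (k al : nat) (a : nat -> C) := exists c : R, exists q : nat,
  0 <= c /\ forall m, nm (iter k D a m) * m.+1%:R ^+ (k + al) <= c * H m ^+ q.
Definition Good (al : nat) (a : nat -> C) := forall k, bnd k al a.

Lemma bnd_ext k al (a b : nat -> C) : a =1 b -> bnd k al a -> bnd k al b.
Proof. by move=> /boolp.funext ->. Qed.

Lemma bnd_add k al (a b : nat -> C) : bnd k al a -> bnd k al b ->
  bnd k al (fun m => a m + b m).
Proof.
move=> [c1 [q1 [c10 h1]]] [c2 [q2 [c20 h2]]].
exists (c1 + c2), (q1 + q2)%N; split; first exact: addr_ge0.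
move=> m; rewrite iter_add.
have P := exprn_ge0 (k + al) (ler0n R m.+1).
apply: le_trans (ler_wpM2r P (nmD _ _)) _; rewrite mulrDl [X in _ <= X]mulrDl.
apply: lerD.
  apply: le_trans (h1 m) _; apply: ler_wpM2l => //; apply: Hpow_le; exact: leq_addr.
apply: le_trans (h2 m) _; apply: ler_wpM2l => //; apply: Hpow_le; exact: leq_addl.
Qed.

Lemma bnd_scale k al z (a : nat -> C) : bnd k al a -> bnd k al (fun m => z * a m).
Proof.
move=> [c [q [c0 h]]]; exists (nm z * c), q; split; first exact: mulr_ge0 (nm_ge0 _) c0.
by move=> m; rewrite iter_scale nmM -!mulrA; apply: ler_wpM2l; [exact: nm_ge0 | exact: h].
Qed.

Lemma bnd_delta k al (a : nat -> C) : bnd k al.+1 (D a) -> bnd k.+1 al a.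
Proof.
move=> [c [q [c0 h]]]; exists c, q; split => // m.
by rewrite iterSr addSn -addnS; apply: h.
Qed.

Lemma bnd_deltaI k al (a : nat -> C) : bnd k.+1 al a -> bnd k al.+1 (D a).
Proof.
move=> [c [q [c0 h]]]; exists c, q; split => // m.
by rewrite addnS -addSn -iterSr; apply: h.
Qed.

Lemma Good_delta al (a : nat -> C) : Good al a -> Good al.+1 (D a).
Proof. by move=> h k; apply: bnd_deltaI. Qed.

Lemma bnd_weaken k al be (a : nat -> C) : (be <= al)%N -> bnd k al a -> bnd k be a.
Proof.
move=> hb [c [q [c0 h]]]; exists c, q; split => // m; apply: le_trans (h m).
apply: ler_wpM2l; first exact: nm_ge0.
by apply: ler_weXn2l; [rewrite ler1n | rewrite leq_add2l].
Qed.

Lemma Good_weaken al be (a : nat -> C) : (be <= al)%N -> Good al a -> Good be a.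
Proof. by move=> hb h k; apply: bnd_weaken hb (h k). Qed.

Lemma bnd_shift k al (a : nat -> C) : bnd k al a -> bnd k al (fun m => a m.+1).
Proof.
move=> [c [q [c0 h]]]; exists (c * 2 ^+ q), q; split.
  by apply: mulr_ge0 => //; apply: exprn_ge0.
move=> m; rewrite iter_shift; apply: (@le_trans _ _ (c * H m.+1 ^+ q)).
  apply: le_trans (h m.+1); apply: ler_wpM2l; first exact: nm_ge0.
  by apply: lerXn2r; rewrite ?nnegrE ?ler0n // ler_nat.
rewrite -mulrA; apply: ler_wpM2l => //; rewrite -exprMn.
by apply: lerXn2r; rewrite ?nnegrE ?H_ge0 ?mulr_ge0 ?H_ge0 // H_S2.
Qed.

Lemma Good_shift al (a : nat -> C) : Good al a -> Good al (fun m => a m.+1).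
Proof. by move=> h k; apply: bnd_shift. Qed.


Lemma delta_mul (a b : nat -> C) m :
  D (fun m => a m * b m) m = D a m * b m + a m.+1 * D b m.
Proof. by rewrite /delta; ring. Qed.

Lemma bnd_mul k : forall al be (a b : nat -> C), Good al a -> Good be b ->
  bnd k (al + be) (fun m => a m * b m).
Proof.
elim: k => [|k IH] al be a b ha hb.
  have [c1 [q1 [c10 h1]]] := ha 0%N; have [c2 [q2 [c20 h2]]] := hb 0%N.
  exists (c1 * c2), (q1 + q2)%N; split; first exact: mulr_ge0.
  move=> m /=; rewrite nmM !add0n exprD mulrACA.
  have -> : c1 * c2 * H m ^+ (q1 + q2) = (c1 * H m ^+ q1) * (c2 * H m ^+ q2).
    by rewrite exprD; ring.
  apply: ler_pM; try by apply: mulr_ge0; [exact: nm_ge0 | exact: exprn_ge0].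
    exact: h1.
  exact: h2.
apply: bnd_delta.
apply: (@bnd_ext _ _ (fun m => D a m * b m + a m.+1 * D b m)).
  by move=> m; rewrite delta_mul.
apply: bnd_add.
  by have := IH al.+1 be _ _ (Good_delta ha) hb; rewrite addSn.
by have := IH al be.+1 _ _ (Good_shift ha) (Good_delta hb); rewrite addnS.
Qed.

Lemma Good_mul al be (a b : nat -> C) : Good al a -> Good be b ->
  Good (al + be) (fun m => a m * b m).
Proof. by move=> ha hb k; apply: bnd_mul. Qed.

Lemma geom_sum0 (r : R) n : (1 - r) * \sum_(j < n) r ^+ j + r ^+ n = 1.
Proof.
elim: n => [|n IH]; first by rewrite big_ord0 mulr0 add0r expr0.
by rewrite big_ord_recr /= -[RHS]IH exprS; ring.
Qed.

Lemma geom_binS (r : R) N n :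
  (1 - r) * \sum_(j < n) r ^+ j * 'C(j + N.+1, N.+1)%:R + r ^+ n * 'C(n + N, N.+1)%:R
  = \sum_(j < n) r ^+ j * 'C(j + N, N)%:R.
Proof.
elim: n => [|n IH].
  by rewrite !big_ord0 mulr0 add0r add0n bin_small // mulr0.
rewrite !big_ord_recr /= -IH addSn addnS binS natrD exprS; ring.
Qed.

Lemma geom_bin_bound (r : R) N n : 0 <= r -> r < 1 ->
  (1 - r) ^+ N.+1 * \sum_(j < n) r ^+ j * 'C(j + N, N)%:R <= 1.
Proof.
move=> r0 r1; have r1' : 0 <= 1 - r by rewrite subr_ge0 ltW.
elim: N => [|N IH].
  rewrite expr1; under eq_bigr => j _ do rewrite addn0 bin0 mulr1.
  by rewrite -[X in _ <= X](geom_sum0 r n) lerDl exprn_ge0.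
apply: le_trans _ IH; rewrite exprSr -mulrA; apply: ler_wpM2l; first exact: exprn_ge0.
rewrite -(geom_binS r N n) lerDl; apply: mulr_ge0; [exact: exprn_ge0 | exact: ler0n].
Qed.

Lemma pow_le_ffact j N : (j.+1 ^ N <= N`! * 'C(j + N, N))%N.
Proof.
rewrite mulnC bin_ffact; elim: N => [|N IH] //.
rewrite expnS addnS ffactnS /=; apply: leq_mul => //.
by rewrite ltnS leq_addr.
Qed.

Lemma geom_poly (r : R) N : 0 <= r -> r < 1 ->
  exists K, 0 <= K /\ forall n, \sum_(j < n) r ^+ j * (j.+1%:R) ^+ N <= K.
Proof.
move=> r0 r1; have r1' : 0 < 1 - r by rewrite subr_gt0.
exists (N`!%:R / (1 - r) ^+ N.+1); split.
  by apply: divr_ge0; [exact: ler0n | exact: exprn_ge0 _ (ltW r1')].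
move=> n; rewrite ler_pdivlMr ?exprn_gt0 //.
apply: (@le_trans _ _ ((N`!%:R * \sum_(j < n) r ^+ j * 'C(j + N, N)%:R) * (1 - r) ^+ N.+1)).
  apply: ler_wpM2r; first exact: exprn_ge0 _ (ltW r1').
  rewrite mulr_sumr; apply: ler_sum => j _.
  rewrite mulrCA; apply: ler_wpM2l; first exact: exprn_ge0.
  by rewrite -natrX -natrM ler_nat pow_le_ffact.
rewrite -mulrA [X in _ * X <= _]mulrC; apply: ler_piMr; first exact: ler0n.
by apply: geom_bin_bound => //; rewrite ltW.
Qed.

Lemma geom_term (r : R) N : 0 <= r -> r < 1 ->
  exists K, 0 <= K /\ forall m, r ^+ m * (m.+1%:R) ^+ N <= K.
Proof.
move=> r0 r1; have [K [K0 hK]] := geom_poly N r0 r1; exists K; split => // m.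
apply: le_trans (hK m.+1); rewrite big_ord_recr /= lerDr.
by apply: sumr_ge0 => j _; apply: mulr_ge0; apply: exprn_ge0 => //; exact: ler0n.
Qed.

Lemma iter_geom k (s : C) :
  iter k D (fun m => s ^+ m) = (fun m => (1 - s) ^+ k * s ^+ m).
Proof.
elim: k => [|k IH] /=; first by apply: boolp.funext => m; rewrite mul1r.
by rewrite IH; apply: boolp.funext => m; rewrite /delta !exprS; ring.
Qed.

Lemma Good_geom al (s : C) : nm s < 1 -> Good al (fun m => s ^+ m).
Proof.
move=> hs k; have [K [K0 hK]] := geom_term (k + al) (nm_ge0 s) hs.
exists (2 ^+ k * K), 0%N; split; first by apply: mulr_ge0 => //; exact: exprn_ge0.
move=> m; rewrite iter_geom expr0 mulr1 nmM !nmX -mulrA.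
apply: ler_pM; first by apply: exprn_ge0; exact: nm_ge0.
- by apply: mulr_ge0; [apply: exprn_ge0; exact: nm_ge0 | apply: exprn_ge0; exact: ler0n].
- apply: lerXn2r; rewrite ?nnegrE ?nm_ge0 //; apply: le_trans (nmB _ _) _.
  by rewrite nm1; move: hs; lra.
- exact: hK.
Qed.

Lemma iter_fin (a : nat -> C) k m : (forall n, (0 < n)%N -> a n = 0) ->
  (0 < m)%N -> iter k D a m = 0.
Proof.
move=> ha; elim: k m => [|k IH] m hm /=; first exact: ha.
by rewrite /delta !IH // subr0.
Qed.

Lemma Good_fin al (a : nat -> C) : (forall n, (0 < n)%N -> a n = 0) -> Good al a.
Proof.
move=> ha k; exists (nm (iter k D a 0)), 0%N; split; first exact: nm_ge0.
move=> [|m]; first by rewrite expr1n expr0 !mulr1.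
by rewrite iter_fin // nm0 mul0r expr0 mulr1 nm_ge0.
Qed.


Definition Pn (k m : nat) : nat := \prod_(i < k.+1) (m + i).+1.

Lemma Pn_ne0 k m : (Pn k m)%:R != 0 :> C.
Proof. by rewrite pnatr_eq0 -lt0n /Pn prodn_gt0. Qed.

Lemma iter_inv k m :
  iter k D (fun n => (n.+1%:R : C)^-1) m = k`!%:R / (Pn k m)%:R.
Proof.
elim: k m => [|k IH] m /=.
  by rewrite /Pn big_ord1 addn0 div1r.
rewrite /delta !IH.
have e1 : Pn k.+1 m = (Pn k m * (m + k.+1).+1)%N by rewrite /Pn big_ord_recr.
have e2 : Pn k.+1 m = (m.+1 * Pn k m.+1)%N.
  rewrite /Pn big_ord_recl addn0; congr muln; apply: eq_bigr => i _.
  by rewrite /= /bump leq0n add1n addnS addSn.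
have hA := Pn_ne0 k m; have hB := Pn_ne0 k m.+1.
have hQ := Pn_ne0 k.+1 m.
have eB : ((Pn k m.+1)%:R : C)^-1 = m.+1%:R / (Pn k.+1 m)%:R.
  rewrite e2 natrM invfM mulrA divff ?mul1r // pnatr_eq0.
rewrite eB {2}e1 natrM factS natrM.
have hk : ((m + k.+1).+1%:R : C) != 0 by rewrite pnatr_eq0.
rewrite e1 natrM.
rewrite -addSn natrD.
by field; rewrite !nat1r -natrD pnatr_eq0 hA.
Qed.

Lemma Good_inv : Good 1 (fun n => (n.+1%:R : C)^-1).
Proof.
move=> k; exists k`!%:R, 0%N; split; first exact: ler0n.
move=> m; rewrite iter_inv expr0 mulr1 nmM nmV !nm_nat addn1.
rewrite -mulrA ler_piMr ?ler0n // mulrC ler_pdivrMr; last first.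
  by rewrite ltr0n lt0n -(@pnatr_eq0 C) Pn_ne0.
rewrite mul1r -natrX ler_nat /Pn.
have -> : (m.+1 ^ k.+1)%N = \prod_(i < k.+1) m.+1 by rewrite prod_nat_const card_ord.
apply: leq_prod => i _.
by rewrite ltnS leq_addr.
Qed.

Lemma H0 : H 0 = 1.
Proof. by rewrite /H big_ord1 /= mulr1n invr1. Qed.

Lemma Hsum q m : \sum_(j < m.+1) H j ^+ q / j.+1%:R <= H m ^+ q.+1.
Proof.
elim: m => [|m IH].
  by rewrite big_ord1 H0 !expr1n /= mulr1n invr1 mulr1.
rewrite big_ord_recr /=; apply: le_trans (lerD IH (lexx _)) _.
rewrite H_S; set x := H m; set d := (m.+2%:R : R)^-1.
have x0 : 0 <= x by exact: H_ge0.
have d0 : 0 <= d by rewrite invr_ge0 ler0n.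
rewrite [X in _ <= X]exprS [X in _ <= X]mulrC mulrDr.
rewrite [x ^+ q.+1]exprS [x * _]mulrC lerD2r ?lerD ?lexx //.
by apply: ler_wpM2r => //; apply: lerXn2r; rewrite ?nnegrE ?addr_ge0 // lerDl.
Qed.

Lemma Good_cumsum (b : nat -> C) : Good 1 b ->
  Good 0 (fun m => \sum_(j < m.+1) b j).
Proof.
move=> hb [|k].
  have [c [q [c0 h]]] := hb 0%N.
  exists c, q.+1; split => // m /=; rewrite expr0 mulr1.
  apply: le_trans (nm_sum _ _ _) _.
  apply: (@le_trans _ _ (\sum_(j < m.+1) c * (H j ^+ q / j.+1%:R))).
    apply: ler_sum => j _; rewrite mulrA ler_pdivlMr ?ltr0n //.
    all: try by have := h j; rewrite /= expr1.
  by rewrite -mulr_sumr; apply: ler_wpM2l => //; exact: Hsum.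
apply: bnd_delta.
apply: (@bnd_ext _ _ (fun m => (-1) * b m.+1)).
  by move=> m; rewrite /delta /= [X in _ = _ - X]big_ord_recr /=; ring.
by apply: bnd_scale; apply: bnd_shift; apply: hb.
Qed.

Definition conv (s : C) (b : nat -> C) (m : nat) : C :=
  \sum_(j < m.+1) s ^+ j * b (m - j)%N.

Lemma delta_conv s (b : nat -> C) m :
  D (conv s b) m = conv s (D b) m + (- (s * b 0%N)) * s ^+ m.
Proof.
rewrite /delta /conv [X in _ - X]big_ord_recr /= subnn.
have -> : \sum_(j < m.+1) s ^+ j * b (m.+1 - j)%N =
          \sum_(j < m.+1) s ^+ j * b (m - j).+1%N.
  by apply: eq_bigr => j _; rewrite subSn // -ltnS.
rewrite opprD addrA -sumrB.
have -> : \sum_(j < m.+1) s ^+ j * (b (m - j)%N - b (m - j).+1) =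
   \sum_(j < m.+1) (s ^+ j * b (m - j)%N - s ^+ j * b (m - j).+1).
  by apply: eq_bigr => j _; rewrite mulrBr.
by rewrite exprS; ring.
Qed.

Lemma nat_split j m : (j <= m)%N -> (m.+1 <= j.+1 * (m - j).+1)%N.
Proof.
move=> h; have [k ->] : exists k, m = (j + k)%N by exists (m - j)%N; rewrite subnKC.
rewrite addKn; nia.
Qed.

Lemma bnd_conv (s : C) : nm s < 1 -> forall k al (b : nat -> C), Good al b ->
  bnd k al (conv s b).
Proof.
move=> hs; elim=> [|k IH] al b hb.
  have [c [q [c0 h]]] := hb 0%N.
  have [K [K0 hK]] := geom_poly al (nm_ge0 s) hs.
  exists (c * K), q; split; first exact: mulr_ge0.
  move=> m /=; rewrite add0n.
  have P := exprn_ge0 al (ler0n R m.+1).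
  apply: le_trans (ler_wpM2r P (nm_sum _ _ _)) _; rewrite mulr_suml.
  apply: (@le_trans _ _ (\sum_(j < m.+1) c * H m ^+ q * (nm s ^+ j * j.+1%:R ^+ al))).
    apply: ler_sum => j _; rewrite nmM nmX.
    have hj : (j <= m)%N by rewrite -ltnS.
    apply: (@le_trans _ _ (nm s ^+ j * j.+1%:R ^+ al * (nm (b (m - j)%N) * (m - j).+1%:R ^+ al))).
      rewrite [X in _ <= X](_ : _ = nm s ^+ j * nm (b (m - j)%N) * (j.+1%:R ^+ al * (m - j).+1%:R ^+ al)); last by ring.
      apply: ler_wpM2l; first by apply: mulr_ge0; [apply: exprn_ge0; exact: nm_ge0 | exact: nm_ge0].
      rewrite -exprMn -natrM; apply: lerXn2r; rewrite ?nnegrE ?ler0n //.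
      by rewrite ler_nat nat_split.
    rewrite mulrC; apply: ler_wpM2r.
      by apply: mulr_ge0; apply: exprn_ge0; [exact: nm_ge0 | exact: ler0n].
    have := h (m - j)%N; rewrite /= add0n => h'; apply: le_trans h' _.
    apply: ler_wpM2l => //; apply: lerXn2r; rewrite ?nnegrE ?H_ge0 //.
    by apply: H_mono; exact: leq_subr.
  rewrite -mulr_sumr [X in _ <= X]mulrAC; apply: ler_wpM2l; last exact: hK.
  by apply: mulr_ge0 => //; exact: Hpow_ge0.
apply: bnd_delta.
apply: (@bnd_ext _ _ (fun m => conv s (D b) m + (- (s * b 0%N)) * s ^+ m)).
  by move=> m; rewrite delta_conv.
apply: bnd_add; first exact: IH (Good_delta hb).
by apply: bnd_scale; apply: Good_geom.
Qed.


Lemma key (s : C) (b : nat -> C) : Good 1 b -> (nm s < 1 \/ s = 1) ->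
  Good 1 (fun n => n.+1%:R^-1 * conv s b n).
Proof.
move=> hb [hs|->].
  have := Good_mul Good_inv (fun k => bnd_conv hs k hb).
  by apply: Good_weaken.
have e : conv 1 b = (fun m => \sum_(j < m.+1) b j).
  apply: boolp.funext => m; rewrite /conv (reindex_inj rev_ord_inj) /=.
  apply: eq_bigr => j _; rewrite expr1n mul1r subSS subKn //.
  by rewrite -ltnS.
by rewrite e; exact: (Good_mul Good_inv (Good_cumsum hb)).
Qed.

Lemma rec_Good p : forall t : nat -> C,
  (forall k, (k < p.+1)%N -> nm (t k) < 1 \/ t k = 1) -> Good 1 (rec p.+1 t).
Proof.
elim: p => [|p IH] t ht.
  pose b := fun n : nat => if n == 0%N then t 0%N else 0.
  have hb : Good 1 b by apply: Good_fin => -[].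
  have e : rec 1 t = fun n => n.+1%:R^-1 * conv (t 0%N) b n.
    apply: boolp.funext => n /=; rewrite /conv big_ord_recr /= subnn /b /= big1 ?add0r.
      by rewrite exprSr mulrC.
    move=> j _; rewrite (_ : (n - j == 0)%N = false) ?mulr0 //.
    by rewrite subn_eq0 leqNgt ltn_ord.
  by rewrite e; apply: key hb (ht 0%N isT).
have hb := IH (fun k => t k.+1) (fun k hk => ht k.+1 hk).
have e : rec p.+2 t = fun n => n.+1%:R^-1 * conv (t 0%N) (rec p.+1 (fun k => t k.+1)) n.
  by [].
by rewrite e; apply: key hb (ht 0%N isT).
Qed.

Lemma Hln m : H m <= 1 + ln (m.+1%:R : R).
Proof.
elim: m => [|m IH]; first by rewrite H0 ln1 addr0.
rewrite H_S; apply: le_trans (lerD IH (lexx _)) _.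
rewrite -addrA lerD2l -lerBrDl.
have h1 : (0 : R) < m.+1%:R by rewrite ltr0n.
have h2 : (0 : R) < m.+2%:R by rewrite ltr0n.
have e : (m.+1%:R / m.+2%:R : R) = 1 + (- (m.+2%:R)^-1).
  by field; rewrite gt_eqF //; have := ler0n R m; lra.
have hlt : -1 < - (m.+2%:R : R)^-1 by rewrite ltrN2 invf_lt1 // ltr1n.
by have := le_ln1Dx hlt; rewrite -e ln_div ?posrE // -lerN2 opprB.
Qed.

Lemma ln_le_powR (x d : R) : 0 < x -> 0 < d -> ln x <= x `^ d / d.
Proof.
move=> x0 d0; rewrite ler_pdivlMr // mulrC -ln_powR.
by apply: ltW; apply: ln_sublinear; apply: powR_gt0.
Qed.

Lemma H_pow (d : R) : 0 < d -> exists K, 0 <= K /\ forall m, (0 < m)%N -> H m <= K * (m%:R) `^ d.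
Proof.
move=> d0; exists (1 + 2 `^ d / d); split.
  by apply: addr_ge0 => //; apply: divr_ge0; [exact: powR_ge0 | exact: ltW].
move=> m hm; have m1 : (1 : R) <= m%:R by rewrite ler1n.
have pm1 : 1 <= (m%:R : R) `^ d.
  by rewrite -[X in X <= _](powRr0 (m%:R : R)); apply: ler_powR => //; exact: ltW.
apply: le_trans (Hln m) _.
have : ln (m.+1%:R : R) <= (2 * m%:R) `^ d / d.
  apply: le_trans (ln_le_powR _ d0) _; first by rewrite ltr0n.
  apply: ler_wpM2r; first by rewrite invr_ge0 ltW.
  apply: ge0_ler_powR; rewrite ?nnegrE ?ler0n ?mulr_ge0 ?ler0n ?(ltW d0) //.
  by rewrite -natrM ler_nat mul2n -addnn -add1n leq_add2r.
rewrite powRM ?ler0n // => h.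
rewrite mulrDl mul1r; apply: lerD => //.
by rewrite mulrAC.
Qed.

Lemma Hq_bound q (eps : R) : 0 < eps ->
  exists K, 0 <= K /\ forall m, (0 < m)%N -> H m ^+ q <= K * (m%:R) `^ eps.
Proof.
move=> e0; case: q => [|q].
  exists 1; split => // m hm; rewrite expr0 mul1r.
  by rewrite -[X in X <= _](powRr0 (m%:R : R)); apply: ler_powR; [rewrite ler1n | exact: ltW].
have d0 : 0 < eps / q.+1%:R by rewrite divr_gt0 // ltr0n.
have [K [K0 hK]] := H_pow d0.
exists (K ^+ q.+1); split; first exact: exprn_ge0.
move=> m hm; apply: le_trans (_ : _ <= (K * m%:R `^ (eps / q.+1%:R)) ^+ q.+1) _.
  apply: lerXn2r; rewrite ?nnegrE ?H_ge0 ?hK //.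
  by apply: le_trans (H_ge0 m) (hK m hm).
by rewrite exprMn -[X in _ * X <= _]powR_mulrn ?powR_ge0 // -powRrM mulfVK.
Qed.

Lemma Good_asym (a : nat -> C) l (eps : R) : Good 1 a -> 0 < eps ->
  exists (K : R) (M : nat), forall m : nat, (M <= m)%N ->
    nm (iter l D a m) <= K * (m%:R) `^ (- (l.+1%:R - eps)).
Proof.
move=> ha e0; have [c [q [c0 h]]] := ha l.
have [K1 [K10 hK]] := Hq_bound q e0.
exists (c * K1), 1%N => m hm.
have m0 : (0 : R) < m%:R by rewrite ltr0n.
have -> : - (l.+1%:R - eps) = eps + - (l.+1%:R) :> R by rewrite opprB addrC.
rewrite powRD; last by apply/implyP => _; exact: lt0r_neq0.
rewrite powR_invn ?ler0n // mulrA ler_pdivlMr ?exprn_gt0 //.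
apply: (@le_trans _ _ (nm (iter l D a m) * m.+1%:R ^+ (l + 1))).
  rewrite addn1; apply: ler_wpM2l; first exact: nm_ge0.
  by apply: lerXn2r; rewrite ?nnegrE ?ler0n // ler_nat.
apply: le_trans (h m) _; rewrite -mulrA; apply: ler_wpM2l => //.
exact: hK.
Qed.

End Ana.

Unset Implicit Arguments.
Set Strict Implicit.

Theorem corollary3p4 (R : realType) (p l : nat) (s : 'I_p -> R[i]) :
  (0 < p)%N ->
  (forall i : 'I_p, cmod (s i) < 1 \/ s i = 1) ->
  forall eps : R, 0 < eps ->
  exists (K : R) (M : nat), forall m : nat, (M <= m)%N ->
    cmod (iter l (@delta R[i]) (ssh s) m)
      <= K * (m%:R) `^ (- (l.+1%:R - eps)).
Proof.
case: p s => // p s _ hs eps e0.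
have -> : ssh s = rec p.+1 (ext s) by apply: boolp.funext => m; exact: ssh_rec.
apply: Good_asym => //; apply: rec_Good => k hk.
rewrite /ext; case: insubP => [i _ _|]; first exact: hs.
by rewrite hk.
Qed.
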